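(* Fix $A\in\mathbb R$, $T>0$ and $b\ge0$. There is a constant $C=C(A,b,T)$, not depending on $\epsilon$, such that for all sufficiently small $\epsilon>0$, all $t\in[0,\epsilon^{-2}T]$ and all $x,y\in\mathbb Z_{\ge0}$, $$\mathbf p_t^R(x,y)\le C\,(1\wedge t^{-1/2})\,e^{-b|x-y|(1\wedge t^{-1/2})}.$$
   Context: Let $p_t(x)$, $x\in\mathbb Z$, denote the whole-line semi-discrete heat kernel, i.e. the solution of $\partial_tp_t(x)=\frac12\Delta p_t(x)$, $p_0(x)=1_{\{x=0\}}$, where $\Delta f(x)=f(x+1)+f(x-1)-2f(x)$. For $\epsilon>0$ let $\mu_A=1-A\epsilon$. The half-line Robin heat kernel is, for $t\ge0$ and $x,y\in\mathbb Z_{\ge0}$, $$\mathbf p_t^R(x,y)=p_t(x-y)+\mu_Ap_t(x+y+1)+(1-\mu_A^{-2})\sum_{z=2}^\infty p_t(x+y+z)\mu_A^z;$$ it is the fundamental solution of $\partial_t\mathbf p=\frac12\Delta\mathbf p$ on $\mathbb Z_{\ge0}$ with boundary condition $\mathbf p_t^R(-1,y)=\mu_A\mathbf p_t^R(0,y)$. *)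

(* Defs.v *)
From Stdlib Require Import Reals Lra Lia ZArith Classical ClassicalEpsilon.
Open Scope R_scope.

(* Value of a convergent real series sum_{n>=0} f n (the unique l with
   infinite_sum f l); defaults to 0 if the series does not converge. *)
Definition series (f : nat -> R) : R :=
  match excluded_middle_informative (exists l, infinite_sum f l) with
  | left H => proj1_sig (constructive_indefinite_description _ H)
  | right _ => 0
  end.

(* Whole-line semi-discrete heat kernel p_t(x), the solution of
   d/dt p = 1/2 Delta p, p_0 = 1_{x=0}:
   p_t(x) = e^{-t} I_{|x|}(t) = e^{-t} sum_k (t/2)^{2k+|x|} / (k! (k+|x|)!). *)
Definition heat_kernel (t : R) (x : Z) : R :=
  let m := Z.abs_nat x in
  exp (- t) * series (fun k => (t / 2) ^ (2 * k + m) / (INR (fact k) * INR (fact (k + m)))).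

Definition muA (A eps : R) : R := 1 - A * eps.

Definition robin_kernel (A eps t : R) (x y : nat) : R :=
  let mu := muA A eps in
  heat_kernel t (Z.of_nat x - Z.of_nat y)
  + mu * heat_kernel t (Z.of_nat x + Z.of_nat y + 1)
  + (1 - / mu ^ 2) *
    series (fun n => heat_kernel t (Z.of_nat x + Z.of_nat y + Z.of_nat (n + 2))
                     * mu ^ (n + 2)).

(* 1 /\ t^{-1/2}, with the convention t^{-1/2} = +infinity at t = 0. *)
Definition min1_invsqrt (t : R) : R :=
  if Rle_dec t 1 then 1 else / sqrt t.

(* Main.v *)
Require Import Defs.
From Stdlib Require Import Reals Lra Lia ZArith Classical ClassicalEpsilon.
Open Scope R_scope.
Lemma lim_le_gen (f : nat -> R) l U :
  infinite_sum f l -> (forall N, sum_f_R0 f N <= U) -> l <= U.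
Proof.
  intros H HU. destruct (Rle_dec l U) as [h|h]; auto.
  destruct (H (l - U)) as [N HN]; [lra|].
  specialize (HN N (le_n N)). specialize (HU N). unfold Rdist in HN.
  apply Rabs_def2 in HN. lra.
Qed.

Lemma lim_ge_gen (f : nat -> R) l U :
  infinite_sum f l -> (forall N, U <= sum_f_R0 f N) -> U <= l.
Proof.
  intros H HU. destruct (Rle_dec U l) as [h|h]; auto.
  destruct (H (U - l)) as [N HN]; [lra|].
  specialize (HN N (le_n N)). specialize (HU N). unfold Rdist in HN.
  apply Rabs_def2 in HN. lra.
Qed.

Lemma series_le f U : (forall N, sum_f_R0 f N <= U) -> 0 <= U -> series f <= U.
Proof.
  intros H H0. unfold series. destruct excluded_middle_informative as [e|e]; auto.
  destruct constructive_indefinite_description as [l Hl]; simpl.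
  eapply lim_le_gen; eauto.
Qed.

Lemma series_ge0 f : (forall n, 0 <= f n) -> 0 <= series f.
Proof.
  intros H. unfold series. destruct excluded_middle_informative as [e|e]; [|lra].
  destruct constructive_indefinite_description as [l Hl]; simpl.
  eapply lim_ge_gen; eauto. intros; apply cond_pos_sum; auto.
Qed.

Lemma exp_partial x N : 0 <= x -> sum_f_R0 (fun i => x ^ i / INR (fact i)) N <= exp x.
Proof.
  intros hx. unfold exp. destruct (exist_exp x) as [l Hl]; simpl.
  unfold exp_in in Hl.
  replace (sum_f_R0 (fun i => x ^ i / INR (fact i)) N) with (sum_f_R0 (fun i => / INR (fact i) * x ^ i) N).
  2:{ apply sum_eq; intros; unfold Rdiv; ring. }
  apply sum_incr; [exact Hl|]. intros n. apply Rmult_le_pos.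
  left; apply Rinv_0_lt_compat, INR_fact_lt_0. apply pow_le; auto.
Qed.

Lemma sum_ge_last f N : (forall n, 0 <= f n) -> f N <= sum_f_R0 f N.
Proof. intros H; destruct N; simpl. lra. pose proof (cond_pos_sum f N H); lra. Qed.

Lemma exp_term x n : 0 <= x -> x ^ n / INR (fact n) <= exp x.
Proof.
  intros hx. eapply Rle_trans; [|apply (exp_partial x n hx)].
  apply (sum_ge_last (fun i => x ^ i / INR (fact i))). intros.
  apply Rmult_le_pos. apply pow_le; auto. left; apply Rinv_0_lt_compat, INR_fact_lt_0.
Qed.

Lemma exp_pow a n : exp a ^ n = exp (a * INR n).
Proof.
  induction n. simpl. rewrite Rmult_0_r, exp_0; auto.
  rewrite S_INR; simpl. rewrite IHn, <- exp_plus. f_equal; ring.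
Qed.

Definition pois (r : R) (j : nat) := exp (- r) * r ^ j / INR (fact j).

Lemma pois_ge0 r j : 0 <= r -> 0 <= pois r j.
Proof. intros. unfold pois. apply Rmult_le_pos. apply Rmult_le_pos. left; apply exp_pos. apply pow_le; auto.
  left; apply Rinv_0_lt_compat, INR_fact_lt_0. Qed.

Lemma pois_sum r N : 0 <= r -> sum_f_R0 (pois r) N <= 1.
Proof.
  intros hr. unfold pois.
  replace (sum_f_R0 (fun j => exp (- r) * r ^ j / INR (fact j)) N) with
    (exp (-r) * sum_f_R0 (fun i => r ^ i / INR (fact i)) N).
  2:{ rewrite scal_sum. apply sum_eq; intros; unfold Rdiv; ring. }
  pose proof (exp_partial r N hr). pose proof (exp_pos (-r)).
  replace 1 with (exp (-r) * exp r) by (rewrite <- exp_plus, Rplus_opp_l, exp_0; auto).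
  apply Rmult_le_compat_l; lra.
Qed.

Lemma pois_le1 r j : 0 <= r -> pois r j <= 1.
Proof. intros hr. eapply Rle_trans; [apply sum_ge_last|apply (pois_sum r j hr)].
  intros; apply pois_ge0; auto. Qed.

Lemma pois_S r j : pois r (S j) = pois r j * r / INR (S j).
Proof. unfold pois. rewrite fact_simpl, mult_INR. rewrite <- tech_pow_Rmult.
  pose proof (INR_fact_lt_0 j). pose proof (lt_0_INR (S j) (Nat.lt_0_succ j)).
  field. split; apply Rgt_not_eq; lra. Qed.

Lemma pois_shift r a j : 0 <= r -> pois r j * exp (a * INR j) = exp (r * (exp a - 1)) * pois (r * exp a) j.
Proof.
  intros hr. unfold pois. rewrite Rpow_mult_distr, exp_pow.
  replace (exp (- r)) with (exp (r * (exp a - 1)) * exp (- (r * exp a))).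
  2:{ rewrite <- exp_plus. f_equal; ring. }
  unfold Rdiv. ring.
Qed.

Lemma exp_le_mono x y : x <= y -> exp x <= exp y.
Proof. intros [h|h]. left; apply exp_increasing; auto. subst; lra. Qed.

Lemma exp_le_1 x : x <= 0 -> exp x <= 1.
Proof. intros h. rewrite <- exp_0. apply exp_le_mono; auto. Qed.
Lemma exp_ge_1 x : 0 <= x -> 1 <= exp x.
Proof. intros h. rewrite <- exp_0. apply exp_le_mono; auto. Qed.
Lemma floor_nat x : 0 <= x -> exists L : nat, INR L <= x < INR L + 1.
Proof.
  intros hx. destruct (base_Int_part x) as [h1 h2].
  assert (hz : (0 <= Int_part x)%Z).
  { apply le_IZR. assert (-1 < IZR (Int_part x)) by lra.
    destruct (Z_lt_le_dec (Int_part x) 0) as [h|h]; [|apply IZR_le; auto].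
    assert (Int_part x <= -1)%Z by lia. apply IZR_le in H0. lra. }
  exists (Z.to_nat (Int_part x)). rewrite INR_IZR_INZ, Z2Nat.id; auto. lra.
Qed.

Lemma window_sum f a L : (forall n, 0 <= f n) ->
  sum_f_R0 (fun i => f (a + i)%nat) L <= sum_f_R0 f (a + L).
Proof.
  intros H. induction L.
  - simpl. rewrite Nat.add_0_r. apply sum_ge_last; auto.
  - simpl. rewrite Nat.add_succ_r. simpl. lra.
Qed.

Lemma sum_const_lb (g : nat -> R) c L : (forall i, (i <= L)%nat -> c <= g i) ->
  c * INR (S L) <= sum_f_R0 g L.
Proof. intros H. rewrite <- sum_cte. apply sum_Rle. auto. Qed.

Lemma bernoulli x n : 0 <= x <= 1 -> 1 - INR n * x <= (1 - x) ^ n.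
Proof.
  intros hx. induction n. simpl; lra.
  rewrite S_INR. simpl. assert (0 <= 1 - x) by lra.
  assert (0 <= INR n) by apply pos_INR.
  assert (INR n * x * x >= 0) by (apply Rle_ge; repeat apply Rmult_le_pos; lra).
  apply Rle_trans with ((1 - x) * (1 - INR n * x)). nra.
  apply Rmult_le_compat_l; lra.
Qed.

Lemma pow_le_mono_dec q i L : 0 <= q <= 1 -> (i <= L)%nat -> q ^ L <= q ^ i.
Proof.
  intros hq hi. replace L with (i + (L - i))%nat by lia. rewrite pow_add.
  assert (0 <= q ^ i) by (apply pow_le; lra).
  assert (q ^ (L - i) <= 1) by (rewrite <- (pow1 (L - i)); apply pow_incr; lra).
  nra.
Qed.

Lemma pois_mode r j : 0 < r -> pois r j <= 6 / sqrt r.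
Proof.
  intros hr.
  assert (hs : 0 < sqrt r) by (apply sqrt_lt_R0; auto).
  assert (hss : sqrt r * sqrt r = r) by (apply sqrt_sqrt; lra).
  destruct (floor_nat (sqrt r / 2)) as [L [hL1 hL2]]; [lra|].
  assert (hL0 : 0 <= INR L) by apply pos_INR.
  set (q0 := 1 - INR L / r).
  assert (hLL : INR L * INR L <= r / 4) by nra.
  assert (hLr : INR L <= r).
  { destruct L. simpl; lra. assert (1 <= INR (S L)) by (apply (le_INR 1); lia). nra. }
  assert (hq0 : 0 <= q0 <= 1).
  { unfold q0. split. assert (INR L / r <= 1). apply Rmult_le_reg_r with r; auto.
    unfold Rdiv; rewrite Rmult_assoc, Rinv_l; lra. lra.
    assert (0 <= INR L / r) by (apply Rmult_le_pos; [lra| left; apply Rinv_0_lt_compat; lra]). lra. }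
  assert (hqL : 3/4 <= q0 ^ L).
  { eapply Rle_trans; [|apply bernoulli]. 
    assert (INR L * (INR L / r) <= 1/4).
    { unfold Rdiv. rewrite <- Rmult_assoc. apply Rmult_le_reg_r with r; auto.
      rewrite Rmult_assoc, Rinv_l; lra. } lra.
    split. apply Rmult_le_pos; [lra| left; apply Rinv_0_lt_compat; lra].
    unfold q0 in hq0; lra. }
  assert (hp0 := pois_ge0 r j ltac:(lra)).
  assert (hW : exists a, forall i, (i <= L)%nat -> pois r j * q0 ^ L <= pois r (a + i)).
  { destruct (Rlt_dec (INR j) r) as [hj|hj].
    - exists j. intros i hi.
      apply Rle_trans with (pois r j * q0 ^ i).
      { apply Rmult_le_compat_l; auto. apply pow_le_mono_dec; auto. }
      induction i. { rewrite Nat.add_0_r; simpl; lra. }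
      rewrite Nat.add_succ_r, pois_S, <- tech_pow_Rmult.
      assert (hi' : (i <= L)%nat) by lia. specialize (IHi hi').
      assert (hJ : INR (S (j + i)) < r + INR L).
      { rewrite S_INR, plus_INR. apply le_INR in hi. rewrite S_INR in hi. lra. }
      assert (hJ0 : 0 < INR (S (j + i))) by (apply lt_0_INR; lia).
      assert (q0 <= r / INR (S (j + i))).
      { replace q0 with ((r - INR L)/r) by (unfold q0; field; lra).
        set (J := INR (S (j + i))) in *.
        apply Rmult_le_reg_r with (r*J). nra.
        replace ((r - INR L)/r*(r*J)) with ((r-INR L)*J) by (field; lra).
        replace (r/J*(r*J)) with (r*r) by (field;lra). nra. }
      assert (0 <= q0 ^ i) by (apply pow_le; lra).
      unfold Rdiv in *. rewrite Rmult_assoc.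
      apply Rle_trans with (pois r (j + i) * q0). nra.
      apply Rmult_le_compat_l; [apply pois_ge0; lra| lra].
    - apply Rnot_lt_le in hj. assert (hLj : (L <= j)%nat). { apply INR_le. lra. }
      exists (j - L)%nat. intros i hi.
      replace (j - L + i)%nat with (j - (L - i))%nat by lia.
      apply Rle_trans with (pois r j * q0 ^ (L - i)).
      { apply Rmult_le_compat_l; auto. apply pow_le_mono_dec; auto; lia. }
      assert (hd : (L - i <= L)%nat) by lia. revert hd. generalize (L - i)%nat as d.
      induction d; intros hd. { rewrite Nat.sub_0_r; simpl; lra. }
      specialize (IHd ltac:(lia)).
      set (c := (j - S d)%nat). replace (j - d)%nat with (S c) in IHd by (unfold c; lia).
      rewrite pois_S in IHd.
      assert (hJ0 : 0 < INR (S c)) by (apply lt_0_INR; lia).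
      assert (hJ : r - INR L < INR (S c)).
      { assert (S c + S d = j + 1)%nat by (unfold c; lia).
        apply le_INR in hd. rewrite S_INR in hd.
        assert (INR (S c) + INR (S d) = INR j + 1). { rewrite <- plus_INR, H, plus_INR; simpl; lra. }
        rewrite (S_INR d) in H0. lra. }
      rewrite <- tech_pow_Rmult.
      assert (0 <= q0 ^ d) by (apply pow_le; lra).
      assert (hk : r * q0 / INR (S c) <= 1).
      { replace (r * q0) with (r - INR L) by (unfold q0; field; lra).
        apply Rmult_le_reg_r with (INR (S c)); auto. unfold Rdiv.
        rewrite Rmult_assoc, Rinv_l; lra. }
      assert (hpc0 := pois_ge0 r c ltac:(lra)).
      apply Rle_trans with (pois r c * r / INR (S c) * q0).
      { rewrite (Rmult_comm q0), <- Rmult_assoc. apply Rmult_le_compat_r; lra. }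
      replace (pois r c * r / INR (S c) * q0) with (pois r c * (r * q0 / INR (S c))) by (field; lra).
      rewrite <- (Rmult_1_r (pois r c)) at 2. apply Rmult_le_compat_l; lra. }
  destruct hW as [a hW].
  pose proof (sum_const_lb (fun i => pois r (a + i)%nat) _ L hW).
  pose proof (window_sum (pois r) a L (fun n => pois_ge0 r n ltac:(lra))).
  pose proof (pois_sum r (a + L) ltac:(lra)).
  rewrite S_INR in H.
  assert (hpr : pois r j * (3/4) * (INR L + 1) <= 1).
  { apply Rle_trans with (pois r j * q0 ^ L * (INR L + 1)); [|lra].
    apply Rmult_le_compat_r; [lra|]. apply Rmult_le_compat_l; lra. }
  apply Rmult_le_reg_r with (sqrt r); auto.
  unfold Rdiv; rewrite Rmult_assoc, Rinv_l; [|lra]. nra.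
Qed.

Lemma scal_sum_l (f : nat -> R) c N : sum_f_R0 (fun k => c * f k) N = c * sum_f_R0 f N.
Proof. rewrite scal_sum. apply sum_eq; intros; ring. Qed.

Lemma decomp s l P N m : 0 <= s -> 0 <= P -> (forall j, pois (s * exp l) j <= P) ->
  sum_f_R0 (fun k => pois s k * pois s (k + m)) N <=
  exp (- l * INR m) * exp (s * (exp l - 1)) * P * exp (s * (exp (- l) - 1)).
Proof.
  intros hs hP hj.
  set (K := exp (- l * INR m) * exp (s * (exp l - 1)) * P).
  assert (hK : 0 <= K) by (unfold K; repeat apply Rmult_le_pos; auto; left; apply exp_pos).
  apply Rle_trans with (sum_f_R0 (fun k => K * (exp (s * (exp (- l) - 1)) * pois (s * exp (- l)) k)) N).
  - apply sum_Rle. intros k _.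
    assert (e1 : pois s k * pois s (k + m) =
      exp (- l * INR m) * (pois s k * exp (- l * INR k)) * (pois s (k + m) * exp (l * INR (k + m)))).
    { rewrite plus_INR. 
      replace (exp (- l * INR m) * (pois s k * exp (- l * INR k)) * (pois s (k + m) * exp (l * (INR k + INR m))))
        with (pois s k * pois s (k + m) * (exp (- l * INR m) * exp (- l * INR k) * exp (l * (INR k + INR m)))) by ring.
      rewrite <- !exp_plus. replace (- l * INR m + - l * INR k + l * (INR k + INR m)) with 0 by ring.
      rewrite exp_0; ring. }
    rewrite e1, !pois_shift; auto.
    unfold K.
    assert (0 <= exp (s * (exp (- l) - 1)) * pois (s * exp (- l)) k).
    { apply Rmult_le_pos. left; apply exp_pos. apply pois_ge0. apply Rmult_le_pos; auto. left; apply exp_pos. }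
    assert (hq := hj (k + m)%nat).
    assert (0 < exp (- l * INR m)) by apply exp_pos.
    assert (0 < exp (s * (exp l - 1))) by apply exp_pos.
    replace (exp (- l * INR m) * (exp (s * (exp (- l) - 1)) * pois (s * exp (- l)) k) *
      (exp (s * (exp l - 1)) * pois (s * exp l) (k + m))) with
      ((exp (- l * INR m) * exp (s * (exp l - 1)) * pois (s * exp l) (k + m)) * (exp (s * (exp (- l) - 1)) * pois (s * exp (- l)) k)) by ring.
    apply Rmult_le_compat_r; auto.
    apply Rmult_le_compat_l; [|auto]. apply Rmult_le_pos; lra.
  - rewrite scal_sum_l.
    apply Rmult_le_compat_l; auto.
    rewrite scal_sum_l.
    rewrite <- (Rmult_1_r (exp (s * (exp (- l) - 1)))) at 2.
    apply Rmult_le_compat_l. left; apply exp_pos.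
    apply pois_sum. apply Rmult_le_pos; auto. left; apply exp_pos.
Qed.

Lemma cosh_bound l : 0 <= l -> exp l + exp (- l) - 2 <= l ^ 2 * exp l.
Proof.
  intros hl. set (u := l / 2).
  assert (ea : exp l = exp u * exp u) by (rewrite <- exp_plus; f_equal; unfold u; field).
  assert (eb : exp (- l) = exp (- u) * exp (- u)) by (rewrite <- exp_plus; f_equal; unfold u; field).
  assert (eab : exp u * exp (- u) = 1) by (rewrite <- exp_plus, Rplus_opp_r, exp_0; auto).
  assert (h1 : 1 - u <= exp (- u)) by (pose proof (exp_ineq1_le (- u)); lra).
  assert (h2 : 1 <= exp u) by (pose proof (exp_ineq1_le u); unfold u in *; lra).
  assert (h3 : exp (- u) <= 1) by (apply exp_le_1; unfold u; lra).
  set (a := exp u) in *. set (b := exp (- u)) in *.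
  assert (0 <= u) by (unfold u; lra).
  assert (ha1 : a - 1 <= u * a) by nra.
  assert (hb1 : 1 - b <= u * a) by nra.
  assert (hd : 0 <= a - b <= 2 * u * a) by lra.
  replace (exp l + exp (- l) - 2) with ((a - b) * (a - b)) by (rewrite ea, eb; nra).
  replace (l ^ 2 * exp l) with ((2 * u * a) * (2 * u * a)) by (rewrite ea; unfold u; field).
  apply Rmult_le_compat; lra.
Qed.

Definition m1 (t : R) : R := if Rle_dec t 1 then 1 else / sqrt t.

Definition KH (be : R) : R := 6 * sqrt 2 * exp (be ^ 2 * exp be / 2) + exp ((exp be - 1) / 2).

Lemma KH_pos be : 0 < KH be.
Proof. unfold KH. pose proof (exp_pos (be ^ 2 * exp be / 2)). pose proof (exp_pos ((exp be - 1) / 2)).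
  assert (0 < sqrt 2) by (apply sqrt_lt_R0; lra). nra. Qed.

Lemma m1_pos t : 0 < m1 t.
Proof. unfold m1. destruct Rle_dec. lra. apply Rinv_0_lt_compat, sqrt_lt_R0; lra. Qed.

Lemma abs_nat_INR z : INR (Z.abs_nat z) = Rabs (IZR z).
Proof. rewrite INR_IZR_INZ, Zabs2Nat.id_abs, abs_IZR; auto. Qed.

Lemma heat_bound_sum be t m N : 0 <= be -> 0 <= t ->
  sum_f_R0 (fun k => pois (t/2) k * pois (t/2) (k + m)) N <= KH be * m1 t * exp (- be * INR m * m1 t).
Proof.
  intros hb ht. set (s := t / 2). assert (hs : 0 <= s) by (unfold s; lra).
  pose proof (exp_pos (be ^ 2 * exp be / 2)). pose proof (exp_pos ((exp be - 1) / 2)).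
  assert (hs2 : 0 < sqrt 2) by (apply sqrt_lt_R0; lra).
  unfold m1. destruct (Rle_dec t 1) as [h1|h1].
  - eapply Rle_trans. apply (decomp s be 1 N m hs ltac:(lra)). intros; apply pois_le1.
    apply Rmult_le_pos; auto; left; apply exp_pos.
    assert (exp (s * (exp (- be) - 1)) <= 1).
    { apply exp_le_1. assert (exp (- be) <= 1) by (apply exp_le_1; lra). nra. }
    assert (exp (s * (exp be - 1)) <= exp ((exp be - 1) / 2)).
    { apply exp_le_mono. assert (1 <= exp be) by (apply exp_ge_1; lra). unfold s. nra. }
    pose proof (exp_pos (- be * INR m)). pose proof (exp_pos (s * (exp be - 1))). pose proof (exp_pos (s * (exp (- be) - 1))).
    rewrite !Rmult_1_r. replace (- be * INR m) with (- be * INR m) by ring.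
    assert (KH be >= exp ((exp be - 1) / 2)). { unfold KH. nra. }
    apply Rle_trans with (exp (- be * INR m) * exp ((exp be - 1) / 2) * 1).
    { apply Rmult_le_compat; try nra. }
    nra.
  - apply Rnot_le_lt in h1.
    assert (hst : 1 < sqrt t). { rewrite <- sqrt_1. apply sqrt_lt_1; lra. }
    assert (hsq : sqrt t * sqrt t = t) by (apply sqrt_sqrt; lra).
    set (l := be / sqrt t).
    assert (hl : 0 <= l <= be).
    { unfold l. split. apply Rmult_le_pos; [lra|left; apply Rinv_0_lt_compat; lra].
      apply Rmult_le_reg_r with (sqrt t). lra. unfold Rdiv; rewrite Rmult_assoc, Rinv_l; nra. }
    assert (hs0 : 0 < s) by (unfold s; lra).
    assert (hss : sqrt s = sqrt t / sqrt 2).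
    { unfold s. rewrite sqrt_div_alt; lra. }
    assert (hP : forall j, pois (s * exp l) j <= 6 / sqrt s).
    { intros j. eapply Rle_trans. apply pois_mode. pose proof (exp_pos l). nra.
      assert (1 <= exp l) by (apply exp_ge_1; lra).
      assert (sqrt s <= sqrt (s * exp l)) by (apply sqrt_le_1_alt; nra).
      assert (0 < sqrt s) by (apply sqrt_lt_R0; lra).
      unfold Rdiv. apply Rmult_le_compat_l; [lra|]. apply Rinv_le_contravar; lra. }
    eapply Rle_trans. apply (decomp s l (6 / sqrt s) N m hs); auto.
    { unfold Rdiv; apply Rmult_le_pos; [lra|left; apply Rinv_0_lt_compat, sqrt_lt_R0; lra]. }
    assert (hc : s * (exp l - 1) + s * (exp (- l) - 1) <= be ^ 2 * exp be / 2).
    { pose proof (cosh_bound l (proj1 hl)).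
      apply Rle_trans with (s * (l ^ 2 * exp l)). nra.
      replace (s * (l ^ 2 * exp l)) with (be ^ 2 * exp l / 2).
      2:{ assert (hlt : l * l * t = be * be).
          { unfold l. replace (be / sqrt t * (be / sqrt t) * t) with (be * be * (t / (sqrt t * sqrt t))) by (field; lra).
            rewrite hsq. field; lra. }
          unfold s. replace (t / 2 * (l ^ 2 * exp l)) with ((l * l * t) * exp l / 2) by (simpl; field).
          rewrite hlt. simpl; field. }
      assert (exp l <= exp be) by (apply exp_le_mono; lra). pose proof (pow2_ge_0 be). nra. }
    replace (exp (- l * INR m) * exp (s * (exp l - 1)) * (6 / sqrt s) * exp (s * (exp (- l) - 1)))
      with (exp (s * (exp l - 1) + s * (exp (- l) - 1)) * (6 / sqrt s) * exp (- l * INR m))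
      by (rewrite exp_plus; ring).
    replace (- be * INR m * / sqrt t) with (- l * INR m) by (unfold l; field; lra).
    apply Rmult_le_compat_r. left; apply exp_pos.
    rewrite hss. replace (6 / (sqrt t / sqrt 2)) with (6 * sqrt 2 * / sqrt t) by (field; lra).
    assert (0 < / sqrt t) by (apply Rinv_0_lt_compat; lra).
    assert (exp (s * (exp l - 1) + s * (exp (- l) - 1)) <= exp (be ^ 2 * exp be / 2)) by (apply exp_le_mono; lra).
    unfold KH.
    apply Rle_trans with (exp (be ^ 2 * exp be / 2) * (6 * sqrt 2 * / sqrt t)).
    { apply Rmult_le_compat_r; auto. apply Rmult_le_pos; lra. }
    assert (0 <= exp ((exp be - 1) / 2) * / sqrt t) by (apply Rmult_le_pos; lra).
    lra.
Qed.

Lemma term_id t k m : pois (t/2) k * pois (t/2) (k + m) =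
  exp (- t) * ((t / 2) ^ (2 * k + m) / (INR (fact k) * INR (fact (k + m)))).
Proof.
  unfold pois. replace (2 * k + m)%nat with (k + (k + m))%nat by lia. rewrite (pow_add _ k (k + m)).
  replace (exp (- t)) with (exp (- (t/2)) * exp (- (t/2))) by (rewrite <- exp_plus; f_equal; field).
  pose proof (INR_fact_lt_0 k). pose proof (INR_fact_lt_0 (k + m)).
  field. split; lra.
Qed.

Lemma heat_bound be t z : 0 <= be -> 0 <= t ->
  heat_kernel t z <= KH be * m1 t * exp (- be * Rabs (IZR z) * m1 t).
Proof.
  intros hb ht. unfold heat_kernel. cbv zeta.
  rewrite <- abs_nat_INR. set (m := Z.abs_nat z).
  set (B := KH be * m1 t * exp (- be * INR m * m1 t)).
  assert (hB : 0 <= B).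
  { unfold B. pose proof (KH_pos be). pose proof (m1_pos t). pose proof (exp_pos (- be * INR m * m1 t)).
    apply Rmult_le_pos; [apply Rmult_le_pos|]; lra. }
  set (f := fun k => (t / 2) ^ (2 * k + m) / (INR (fact k) * INR (fact (k + m)))).
  assert (hs : series f <= B * exp t).
  { apply series_le.
    - intros N. 
      assert (e : sum_f_R0 f N = exp t * sum_f_R0 (fun k => pois (t/2) k * pois (t/2) (k + m)) N).
      { rewrite <- scal_sum_l. apply sum_eq. intros i _. rewrite term_id. unfold f.
        rewrite <- Rmult_assoc, <- exp_plus, Rplus_opp_r, exp_0. ring. }
      rewrite e. rewrite Rmult_comm. apply Rmult_le_compat_r. left; apply exp_pos.
      apply heat_bound_sum; auto.
    - pose proof (exp_pos t). nra. }
  pose proof (exp_pos (- t)).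
  apply Rle_trans with (exp (- t) * (B * exp t)). apply Rmult_le_compat_l; lra.
  replace (exp (- t) * (B * exp t)) with (B * (exp (- t) * exp t)) by ring.
  rewrite <- exp_plus, Rplus_opp_l, exp_0. lra.
Qed.

Lemma heat_ge0 t z : 0 <= t -> 0 <= heat_kernel t z.
Proof.
  intros ht. unfold heat_kernel. cbv zeta. apply Rmult_le_pos. left; apply exp_pos.
  apply series_ge0. intros n. apply Rmult_le_pos. apply pow_le; lra.
  left; apply Rinv_0_lt_compat. apply Rmult_lt_0_compat; apply INR_fact_lt_0.
Qed.

Lemma geom_bound q N : 0 <= q < 1 -> sum_f_R0 (fun n => q ^ (n + 2)) N <= / (1 - q).
Proof.
  intros hq. apply Rle_trans with (sum_f_R0 (fun n => q ^ n) N).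
  { apply sum_Rle. intros n _. apply pow_le_mono_dec; lra || lia. }
  rewrite tech3 by lra.
  assert (0 <= q ^ S N) by (apply pow_le; lra).
  unfold Rdiv. rewrite <- (Rmult_1_l (/ (1 - q))) at 2.
  apply Rmult_le_compat_r. left; apply Rinv_0_lt_compat; lra. lra.
Qed.

Lemma IZR_diff x y : IZR (Z.of_nat x - Z.of_nat y) = INR x - INR y.
Proof. rewrite minus_IZR, <- !INR_IZR_INZ; auto. Qed.

Lemma IZR_sum3 x y n : IZR (Z.of_nat x + Z.of_nat y + Z.of_nat n) = INR x + INR y + INR n.
Proof. rewrite !plus_IZR, <- !INR_IZR_INZ; auto. Qed.

Lemma one_minus_exp u : 0 < u -> u / (1 + u) <= 1 - exp (- u).
Proof.
  intros hu. pose proof (exp_ineq1_le u). pose proof (exp_pos u).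
  assert (exp (- u) = / exp u) by (apply exp_Ropp).
  rewrite H1. assert (/ exp u <= / (1 + u)) by (apply Rinv_le_contravar; lra).
  assert (u / (1 + u) = 1 - / (1 + u)) by (field; lra). lra.
Qed.

Theorem mainTheorem4 (A T b : R) (hT : 0 < T) (hb : 0 <= b) :
  exists C : R, exists eps0 : R, 0 < eps0 /\
    forall eps : R, 0 < eps < eps0 ->
    forall t : R, 0 <= t <= T / eps ^ 2 ->
    forall x y : nat,
      robin_kernel A eps t x y
      <= C * min1_invsqrt t
           * exp (- b * Rabs (INR x - INR y) * min1_invsqrt t).
Proof.
  set (a := Rabs A). assert (ha : 0 <= a) by apply Rabs_pos.
  set (sT := sqrt T). assert (hsT : 0 < sT) by (apply sqrt_lt_R0; auto).
  set (c := (2 * a + 1) * sT). assert (hc : 0 <= c) by (unfold c; nra).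
  set (be := b + c). assert (hbe : 0 <= be) by (unfold be; lra).
  set (K := KH be). assert (hK : 0 < K) by apply KH_pos.
  exists (9 * K), (Rmin (1 / (2 * (a + 1))) sT). split.
  { apply Rmin_pos; auto. apply Rdiv_lt_0_compat; lra. }
  intros eps [he0 he1] t [ht0 ht1] x y.
  assert (he2 : eps <= 1 / (2 * (a + 1))) by (pose proof (Rmin_l (1 / (2 * (a + 1))) sT); lra).
  assert (he3 : eps <= sT) by (pose proof (Rmin_r (1 / (2 * (a + 1))) sT); lra).
  assert (hae : a * eps <= 1/2).
  { apply Rle_trans with (a * (1 / (2 * (a + 1)))). apply Rmult_le_compat_l; lra.
    apply Rmult_le_reg_r with (2 * (a + 1)). lra. field_simplify; lra. }
  assert (hue : (a + 1) * eps <= 1/2).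
  { apply Rle_trans with ((a + 1) * (1 / (2 * (a + 1)))). apply Rmult_le_compat_l; lra.
    right; field; lra. }
  change (min1_invsqrt t) with (m1 t).
  set (M := m1 t). assert (hM : 0 < M) by apply m1_pos.
  assert (hMe : eps / sT <= M).
  { unfold M, m1. destruct Rle_dec.
    - apply Rmult_le_reg_r with sT; auto. unfold Rdiv; rewrite Rmult_assoc, Rinv_l; lra.
    - apply Rnot_le_lt in n.
      assert (hst : 0 < sqrt t) by (apply sqrt_lt_R0; lra).
      assert (sqrt t <= sT / eps).
      { unfold sT. rewrite <- (sqrt_pow2 eps) by lra. rewrite <- sqrt_div_alt.
        apply sqrt_le_1_alt; auto. apply pow_lt; lra. }
      replace (eps / sT) with (/ (sT / eps)) by (field; lra).
      apply Rinv_le_contravar; auto. }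
  set (D := Rabs (INR x - INR y)).
  set (E := exp (- b * D * M)).
  assert (hE : 0 < E) by apply exp_pos.
  assert (hKME : 0 < K * M * E) by (apply Rmult_lt_0_compat; [apply Rmult_lt_0_compat|]; auto).
  assert (hD : D <= INR x + INR y).
  { unfold D. pose proof (pos_INR x). pose proof (pos_INR y). apply Rabs_le. lra. }
  assert (hfar : forall X : R, D <= X -> exp (- be * X * M) <= E).
  { intros X hX. apply exp_le_mono. unfold be. assert (0 <= D) by apply Rabs_pos.
    assert (b * D <= b * X) by (apply Rmult_le_compat_l; auto).
    assert (0 <= c * X) by (apply Rmult_le_pos; lra). nra. }
  set (mu := muA A eps).
  assert (hmu : 1/2 <= mu <= 3/2).
  { unfold mu, muA. assert (Rabs (A * eps) <= 1/2).
    { rewrite Rabs_mult, (Rabs_right eps) by lra. fold a. lra. }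
    pose proof (Rle_abs (A * eps)); pose proof (Rle_abs (- (A * eps))); rewrite Rabs_Ropp in H1; lra. }
  unfold robin_kernel. fold mu.
  assert (h1 : heat_kernel t (Z.of_nat x - Z.of_nat y) <= K * M * E).
  { eapply Rle_trans. apply (heat_bound be); auto. rewrite IZR_diff. fold D. fold M K.
    apply Rmult_le_compat_l. apply Rmult_le_pos; lra. apply hfar; lra. }
  assert (h2 : mu * heat_kernel t (Z.of_nat x + Z.of_nat y + 1) <= 3/2 * (K * M * E)).
  { assert (heat_kernel t (Z.of_nat x + Z.of_nat y + 1) <= K * M * E).
    { eapply Rle_trans. apply (heat_bound be); auto. fold M K.
      replace 1%Z with (Z.of_nat 1) by auto. rewrite IZR_sum3. simpl INR.
      rewrite Rabs_right. 2:{ pose proof (pos_INR x); pose proof (pos_INR y); lra. }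
      apply Rmult_le_compat_l. apply Rmult_le_pos; lra. apply hfar; lra. }
    pose proof (heat_ge0 t (Z.of_nat x + Z.of_nat y + 1) ht0). nra. }
  set (g := fun n => heat_kernel t (Z.of_nat x + Z.of_nat y + Z.of_nat (n + 2)) * mu ^ (n + 2)).
  assert (hS0 : 0 <= series g).
  { apply series_ge0. intros n. unfold g. apply Rmult_le_pos. apply heat_ge0; auto. apply pow_le; lra. }
  assert (h3 : (1 - / mu ^ 2) * series g <= 9/2 * (K * M * E)).
  { destruct (Rle_dec 0 A) as [hA|hA].
    - assert (mu <= 1) by (unfold mu, muA; nra).
      assert (1 <= / mu ^ 2).
      { rewrite <- Rinv_1. apply Rinv_le_contravar. nra. simpl; nra. }
      assert ((1 - / mu ^ 2) * series g <= 0) by nra. lra.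
    - apply Rnot_le_lt in hA.
      assert (hmua : mu = 1 + a * eps) by (unfold mu, muA, a; rewrite Rabs_left; lra).
      assert (hc3 : 0 <= 1 - / mu ^ 2 <= 3 * a * eps).
      { assert (1 <= mu) by nra.
        replace (1 - / mu ^ 2) with ((mu ^ 2 - 1) / mu ^ 2) by (field; lra).
        split. apply Rmult_le_pos. simpl; nra. left; apply Rinv_0_lt_compat; simpl; nra.
        apply Rle_trans with (mu ^ 2 - 1).
        unfold Rdiv. rewrite <- (Rmult_1_r (mu ^ 2 - 1)) at 2.
        apply Rmult_le_compat_l. simpl; nra. rewrite <- Rinv_1. apply Rinv_le_contravar; simpl; nra.
        rewrite hmua. simpl. nra. }
      set (q := mu * exp (- c * M)).
      set (u := (a + 1) * eps).
      assert (hu : 0 < u) by (unfold u; nra).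
      assert (hq : 0 <= q <= exp (- u)).
      { split. unfold q. pose proof (exp_pos (- c * M)). nra.
        unfold q. apply Rle_trans with (exp (a * eps) * exp (- c * M)).
        { apply Rmult_le_compat_r. left; apply exp_pos. rewrite hmua. apply exp_ineq1_le. }
        rewrite <- exp_plus. apply exp_le_mono.
        assert ((2 * a + 1) * eps <= c * M).
        { unfold c. replace ((2 * a + 1) * eps) with ((2 * a + 1) * sT * (eps / sT)) by (field; lra).
          apply Rmult_le_compat_l; [nra|auto]. }
        unfold u. lra. }
      assert (hq1 : q < 1) by (pose proof (exp_pos u); assert (exp (- u) < 1) by (rewrite <- exp_0; apply exp_increasing; lra); lra).
      assert (hSg : series g <= K * M * E * / (1 - q)).
      { apply series_le.
        - intros N. apply Rle_trans with (sum_f_R0 (fun n => K * M * E * q ^ (n + 2)) N).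
          + apply sum_Rle. intros n _. unfold g.
            assert (hh := heat_bound be t (Z.of_nat x + Z.of_nat y + Z.of_nat (n + 2)) hbe ht0).
            fold K M in hh. rewrite IZR_sum3 in hh.
            rewrite Rabs_right in hh. 2:{ pose proof (pos_INR x); pose proof (pos_INR y); pose proof (pos_INR (n+2)); lra. }
            assert (hx : exp (- be * (INR x + INR y + INR (n + 2)) * M) <= E * exp (- c * M) ^ (n + 2)).
            { rewrite exp_pow. unfold E. rewrite <- exp_plus. apply exp_le_mono.
              unfold be. pose proof (pos_INR (n + 2)). assert (0 <= D) by apply Rabs_pos.
              assert (b * D <= b * (INR x + INR y)) by (apply Rmult_le_compat_l; auto).
              pose proof (pos_INR x); pose proof (pos_INR y).
              assert (0 <= c * (INR x + INR y)) by (apply Rmult_le_pos; lra).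
              assert (0 <= b * INR (n + 2)) by (apply Rmult_le_pos; lra).
              assert (0 <= c * (INR x + INR y) * M) by (apply Rmult_le_pos; lra).
              assert (0 <= b * INR (n + 2) * M) by (apply Rmult_le_pos; lra).
              assert (b * D * M <= b * (INR x + INR y) * M) by (apply Rmult_le_compat_r; lra).
              nra. }
            unfold q. rewrite Rpow_mult_distr.
            assert (0 <= mu ^ (n + 2)) by (apply pow_le; lra).
            assert (0 <= K * M) by (apply Rmult_le_pos; lra).
            apply Rle_trans with (K * M * (E * exp (- c * M) ^ (n + 2)) * mu ^ (n + 2)).
            { apply Rmult_le_compat_r; auto. eapply Rle_trans; [apply hh|]. apply Rmult_le_compat_l; auto. }
            right; ring.
          + rewrite scal_sum_l. apply Rmult_le_compat_l; [lra|]. apply geom_bound; lra.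
        - assert (0 < / (1 - q)) by (apply Rinv_0_lt_compat; lra). nra. }
      assert (hinv : / (1 - q) <= (1 + u) / u).
      { assert (u / (1 + u) <= 1 - q) by (pose proof (one_minus_exp u hu); lra).
        replace ((1 + u) / u) with (/ (u / (1 + u))) by (field; lra).
        apply Rinv_le_contravar; auto. apply Rdiv_lt_0_compat; lra. }
      assert (hfin : 3 * a * eps * ((1 + u) / u) <= 9/2).
      { replace (3 * a * eps * ((1 + u) / u)) with (3 * (a / (a + 1)) * (1 + u)) by (unfold u; field; lra).
        assert (a / (a + 1) <= 1). { apply Rmult_le_reg_r with (a + 1). lra. unfold Rdiv; rewrite Rmult_assoc, Rinv_l; lra. }
        assert (0 <= a / (a + 1)) by (apply Rmult_le_pos; [lra|left; apply Rinv_0_lt_compat; lra]).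
        unfold u in *. nra. }
      apply Rle_trans with (3 * a * eps * (K * M * E * / (1 - q))).
      { apply Rmult_le_compat; lra. }
      apply Rle_trans with (K * M * E * (3 * a * eps * ((1 + u) / u))).
      { replace (3 * a * eps * (K * M * E * / (1 - q))) with (K * M * E * (3 * a * eps * / (1 - q))) by ring.
        apply Rmult_le_compat_l; [lra|]. apply Rmult_le_compat_l; [nra|auto]. }
      nra. }
  fold D E. lra.
Qed.
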